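(* For all integers $n\ge1$ and real numbers $x\in(0,1)$, $$\arccos(x)<\int_x^1\frac{U_{2n}(t)}{\sqrt{1-t^2}}\,dt<\pi-\arccos(x).$$ If $x\in(-1,0)$, then both inequalities hold reversed, i.e. $\arccos(x)>\int_x^1\frac{U_{2n}(t)}{\sqrt{1-t^2}}\,dt>\pi-\arccos(x)$.
   Context: $U_j$ denotes the Chebyshev polynomial of the second kind of degree $j$, i.e. $U_j(\cos t)=\sin((j+1)t)/\sin t$ for $t\in[0,\pi]$. *)

(* Defs.v *)
From Stdlib Require Import Reals Lra.
Open Scope R_scope.

(* Chebyshev polynomials of the second kind, via the standard recurrence
   U_0 = 1, U_1 = 2t, U_{j+2} = 2t U_{j+1} - U_j
   (equivalently U_j(cos s) = sin((j+1)s)/sin s). *)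
Fixpoint chebU (j : nat) (t : R) : R :=
  match j with
  | O => 1
  | S m =>
    match m with
    | O => 2 * t
    | S k => 2 * t * chebU m t - chebU k t
    end
  end.

(* Improper Riemann integral with (possible) singularity at the upper
   endpoint 1:  int_a^1 f = l  means f is Riemann integrable on [a,b]
   for every a <= b < 1 and  int_a^b f -> l  as b -> 1^-. *)
Definition improper_int_to_1 (f : R -> R) (a l : R) : Prop :=
  (forall b, a <= b < 1 -> inhabited (Riemann_integrable f a b)) /\
  (forall eps, 0 < eps -> exists delta, 0 < delta /\
     forall b (pr : Riemann_integrable f a b),
       a <= b -> 1 - delta < b < 1 -> Rabs (RiemannInt pr - l) < eps).

(* Main.v *)
Require Import Defs.
From Stdlib Require Import Reals Lra Lia.
From Coquelicot Require Import Coquelicot.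
Open Scope R_scope.

Fixpoint Gs (n : nat) (th : R) : R :=
  match n with O => 0 | S m => Gs m th + sin (2 * INR (S m) * th) / INR (S m) end.
Fixpoint Cs (n : nat) (th : R) : R :=
  match n with O => 0 | S m => Cs m th + cos (2 * INR (S m) * th) end.

Lemma Gs_S m th : Gs (S m) th = Gs m th + sin (2 * INR (S m) * th) / INR (S m).
Proof. reflexivity. Qed.
Lemma Cs_S m th : Cs (S m) th = Cs m th + cos (2 * INR (S m) * th).
Proof. reflexivity. Qed.

Lemma Gs_deriv n th : derivable_pt_lim (Gs n) th (2 * Cs n th).
Proof.
  apply is_derive_Reals.
  induction n as [|m IH].
  - simpl Cs. replace (2*0) with 0 by ring. apply (is_derive_const 0).
  - rewrite Cs_S. apply (is_derive_ext (fun x => Gs m x + sin (2 * INR (S m) * x) / INR (S m))).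
    { intros; rewrite Gs_S; auto. }
    replace (2 * (Cs m th + cos (2 * INR (S m) * th)))
      with (2 * Cs m th + (2 * cos (2 * INR (S m) * th))) by ring.
    apply (is_derive_plus (Gs m) (fun x => sin (2 * INR (S m) * x) / INR (S m))); auto.
    assert (INR (S m) <> 0) by (apply not_0_INR; lia).
    set (k := INR (S m)) in *. clearbody k. auto_derive; auto. field; auto.
Qed.

Lemma Cs_trig n th : 2 * sin th * Cs n th = sin ((2 * INR n + 1) * th) - sin th.
Proof.
  induction n as [|m IH].
  - simpl. replace ((2*0+1)*th) with th by ring. ring.
  - rewrite Cs_S, Rmult_plus_distr_l, IH, S_INR.
    replace ((2 * (INR m + 1) + 1) * th) with (2 * (INR m + 1) * th + th) by ring.
    replace ((2 * INR m + 1) * th) with (2 * (INR m + 1) * th - th) by ring.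
    rewrite sin_plus, sin_minus. ring.
Qed.

Lemma chebU_sin j th : sin th * chebU j (cos th) = sin (INR (S j) * th).
Proof.
  assert (H : forall j, sin th * chebU j (cos th) = sin (INR (S j) * th) /\
                        sin th * chebU (S j) (cos th) = sin (INR (S (S j)) * th)).
  { induction j0 as [|k [IH1 IH2]].
    - simpl. split.
      + replace (1*th) with th by ring. ring.
      + replace ((1+1)*th) with (2*th) by ring. rewrite sin_2a. ring.
    - split; auto.
      change (chebU (S (S k)) (cos th)) with (2 * cos th * chebU (S k) (cos th) - chebU k (cos th)).
      replace (sin th * (2 * cos th * chebU (S k) (cos th) - chebU k (cos th)))
        with (2 * cos th * (sin th * chebU (S k) (cos th)) - sin th * chebU k (cos th)) by ring.
      rewrite IH1, IH2. rewrite !S_INR.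
      replace ((INR k + 1 + 1 + 1) * th) with ((INR k + 1 + 1) * th + th) by ring.
      replace ((INR k + 1) * th) with ((INR k + 1 + 1) * th - th) by ring.
      rewrite sin_plus, sin_minus. ring. }
  apply H.
Qed.

Lemma chebU_Cs n th : sin th <> 0 -> chebU (2 * n) (cos th) = 1 + 2 * Cs n th.
Proof.
  intros Hs.
  apply (Rmult_eq_reg_l (sin th)); auto.
  rewrite chebU_sin.
  replace (sin th * (1 + 2 * Cs n th)) with (sin th + 2 * sin th * Cs n th) by ring.
  rewrite Cs_trig. rewrite S_INR, mult_INR. simpl (INR 2).
  replace ((1 + 1) * INR n + 1) with (2 * INR n + 1) by ring. ring.
Qed.
Lemma interior_min (f df : R -> R) th :
  (forall x, derivable_pt_lim f x (df x)) -> 0 < th < PI/2 -> f th <= 0 ->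
  0 <= f 0 -> 0 <= f (PI/2) -> exists c, 0 < c < PI/2 /\ f c <= 0 /\ df c = 0.
Proof.
  intros Hd Hth Hf H0 H1.
  assert (Hc : forall x, continuity_pt f x).
  { intro x. apply derivable_continuous_pt. exists (df x). apply Hd. }
  destruct (continuity_ab_min f 0 (PI/2)) as [mx [Hmin Hb]].
  { pose proof PI_RGT_0; lra. }
  { intros; apply Hc. }
  assert (Hex : exists c, 0 < c < PI/2 /\ f c <= 0 /\ forall y, 0 <= y <= PI/2 -> f c <= f y).
  { destruct (Req_dec mx 0) as [E|E].
    - subst mx. exists th. split; [lra|]. split; [lra|].
      intros y Hy. assert (f 0 <= f th) by (apply Hmin; lra).
      assert (f 0 <= f y) by (apply Hmin; lra). lra.
    - destruct (Req_dec mx (PI/2)) as [E2|E2].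
      + subst mx. exists th. split; [lra|]. split; [lra|].
        intros y Hy. assert (f (PI/2) <= f th) by (apply Hmin; lra).
        assert (f (PI/2) <= f y) by (apply Hmin; lra). lra.
      + exists mx. split; [lra|]. split.
        * assert (f mx <= f th) by (apply Hmin; lra). lra.
        * auto. }
  destruct Hex as [c [Hc1 [Hc2 Hc3]]].
  exists c. split; auto. split; auto.
  pose (pr := exist (fun l => derivable_pt_abs f c l) (df c) (Hd c) : derivable_pt f c).
  change (df c) with (derive_pt f c pr).
  apply (deriv_minimum f 0 (PI/2)); try lra.
  intros; apply Hc3; lra.
Qed.

Lemma Gs_0 n : Gs n 0 = 0.
Proof. induction n; auto. rewrite Gs_S, IHn, Rmult_0_r, sin_0. field. apply not_0_INR; lia. Qed.

Lemma Gs_PI2 n : Gs n (PI/2) = 0.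
Proof.
  induction n; auto. rewrite Gs_S, IHn. rewrite sin_eq_0_1. field. apply not_0_INR; lia.
  exists (Z.of_nat (S n)). rewrite <- INR_IZR_INZ. field.
Qed.

Lemma crit_sin N c : 0 < c < PI/2 ->
  sin ((2 * INR N + 1) * c) = sin c -> 0 <= sin (2 * INR N * c).
Proof.
  intros Hc E.
  replace (2 * INR N * c) with ((2 * INR N + 1) * c - c) by ring.
  rewrite sin_minus, E.
  assert (0 < sin c) by (apply sin_gt_0; lra).
  assert (0 < cos c) by (apply cos_gt_0; lra).
  pose proof (sin2_cos2 c). pose proof (sin2_cos2 ((2 * INR N + 1) * c)).
  rewrite E in H2. unfold Rsqr in *.
  set (B := cos ((2 * INR N + 1) * c)) in *.
  assert (B <= cos c) by nra. nra.
Qed.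

Lemma crit_sin2 N c : 0 < c < PI/2 ->
  sin ((2 * INR N + 1) * c) = - sin c -> sin (2 * INR N * c) <= 0.
Proof.
  intros Hc E.
  replace (2 * INR N * c) with ((2 * INR N + 1) * c - c) by ring.
  rewrite sin_minus, E.
  assert (0 < sin c) by (apply sin_gt_0; lra).
  assert (0 < cos c) by (apply cos_gt_0; lra).
  pose proof (sin2_cos2 c). pose proof (sin2_cos2 ((2 * INR N + 1) * c)).
  rewrite E in H2. unfold Rsqr in *.
  set (B := cos ((2 * INR N + 1) * c)) in *.
  assert (- cos c <= B) by nra. nra.
Qed.

Lemma Gs_pos m th : 0 < th < PI/2 -> 0 < Gs (S m) th.
Proof.
  revert th. induction m as [|m IH]; intros th Hth.
  - rewrite Gs_S. simpl Gs. simpl INR. replace (2*1*th) with (2*th) by ring.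
    assert (0 < sin (2*th)) by (apply sin_gt_0; lra). lra.
  - destruct (Rlt_le_dec 0 (Gs (S (S m)) th)) as [H|H]; auto.
    exfalso.
    destruct (interior_min (Gs (S (S m))) (fun x => 2 * Cs (S (S m)) x) th) as [c [Hc1 [Hc2 Hc3]]];
      auto.
    { intro; apply Gs_deriv. }
    { rewrite Gs_0; lra. }
    { rewrite Gs_PI2; lra. }
    assert (Hs : sin ((2 * INR (S (S m)) + 1) * c) = sin c).
    { pose proof (Cs_trig (S (S m)) c) as T. assert (Cs (S (S m)) c = 0) by lra.
      rewrite H0 in T. lra. }
    apply crit_sin in Hs; auto.
    rewrite Gs_S in Hc2. specialize (IH c Hc1).
    assert (0 < INR (S (S m))) by (apply lt_0_INR; lia).
    assert (0 <= sin (2 * INR (S (S m)) * c) / INR (S (S m))).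
    { apply Rle_mult_inv_pos; auto. }
    lra.
Qed.

Lemma Gs_upper n th : 0 < th < PI/2 -> Gs n th < PI - 2 * th.
Proof.
  revert th. induction n as [|m IH]; intros th Hth.
  - simpl. lra.
  - destruct (Rlt_le_dec (Gs (S m) th) (PI - 2 * th)) as [H|H]; auto.
    exfalso.
    destruct (interior_min (fun x => PI - 2 * x - Gs (S m) x) (fun x => - 2 - 2 * Cs (S m) x) th)
      as [c [Hc1 [Hc2 Hc3]]]; auto.
    { intro x. replace (-2 - 2 * Cs (S m) x) with (0 - 2 * 1 - 2 * Cs (S m) x) by ring.
      apply derivable_pt_lim_minus; [|apply Gs_deriv].
      apply derivable_pt_lim_minus. apply derivable_pt_lim_const.
      apply derivable_pt_lim_scal. apply derivable_pt_lim_id. }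
    { lra. }
    { rewrite Gs_0; lra. }
    { rewrite Gs_PI2; lra. }
    assert (Hs : sin ((2 * INR (S m) + 1) * c) = - sin c).
    { assert (Cs (S m) c = -1) by lra.
      pose proof (Cs_trig (S m) c) as T. rewrite H0 in T. lra. }
    apply crit_sin2 in Hs; auto.
    rewrite Gs_S in Hc2. specialize (IH c Hc1).
    assert (0 < INR (S m)) by (apply lt_0_INR; lia).
    assert (sin (2 * INR (S m) * c) / INR (S m) <= 0).
    { unfold Rdiv. assert (0 < / INR (S m)) by (apply Rinv_0_lt_compat; auto). nra. }
    lra.
Qed.

Definition fU n t := chebU (2 * n) t / sqrt (1 - t ^ 2).
Definition KU n t := - (acos t + Gs n (acos t)).

Lemma acos_lim t : -1 < t < 1 -> derivable_pt_lim acos t (-1 / sqrt (1 - t²)).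
Proof.
  intros H. pose proof (derive_pt_acos t H) as E. unfold derive_pt in E.
  destruct (derivable_pt_acos t H) as [l Hl]. simpl in E. subst l. exact Hl.
Qed.

Lemma sqrt_pos_t t : -1 < t < 1 -> 0 < sqrt (1 - t ^ 2).
Proof. intros. apply sqrt_lt_R0. nra. Qed.

Lemma KU_deriv n t : -1 < t < 1 -> derivable_pt_lim (KU n) t (fU n t).
Proof.
  intros Ht.
  pose proof (acos_lim t Ht) as Ha.
  pose proof (derivable_pt_lim_comp acos (Gs n) t _ _ Ha (Gs_deriv n (acos t))) as Hg.
  pose proof (derivable_pt_lim_opp _ _ _ (derivable_pt_lim_plus _ _ _ _ _ Ha Hg)) as Hk.
  replace (fU n t) with (- (-1 / sqrt (1 - t²) + 2 * Cs n (acos t) * (-1 / sqrt (1 - t²)))).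
  { exact Hk. }
  unfold fU. replace (1 - t²) with (1 - t ^ 2) by (unfold Rsqr; ring).
  pose proof (acos_bound_lt t Ht).
  assert (Hs : sin (acos t) <> 0) by (apply Rgt_not_eq, sin_gt_0; lra).
  replace (chebU (2 * n) t) with (chebU (2 * n) (cos (acos t))) by (rewrite cos_acos; auto; lra).
  rewrite (chebU_Cs n _ Hs).
  pose proof (sqrt_pos_t t Ht). field. lra.
Qed.

Lemma chebU_cont j : continuity (chebU j).
Proof.
  assert (H : forall j, continuity (chebU j) /\ continuity (chebU (S j))).
  { induction j0 as [|k [IH1 IH2]].
    - split.
      + intro x. apply continuity_pt_const. intros a b; reflexivity.
      + intro x. apply (continuity_pt_mult (fun _ => 2) id).
        apply continuity_pt_const. intros a b; reflexivity. apply derivable_continuous_pt, derivable_pt_id.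
    - split; auto. intro x.
      apply (continuity_pt_minus (fun t => 2 * t * chebU (S k) t) (chebU k)); auto.
      apply (continuity_pt_mult (fun t => 2 * t) (chebU (S k))); auto.
      apply (continuity_pt_mult (fun _ => 2) id).
      apply continuity_pt_const. intros a b; reflexivity. apply derivable_continuous_pt, derivable_pt_id. }
  apply H.
Qed.

Lemma fU_cont n t : -1 < t < 1 -> continuity_pt (fU n) t.
Proof.
  intros Ht. unfold fU.
  apply (continuity_pt_div (chebU (2*n)) (fun t => sqrt (1 - t ^ 2))).
  - apply chebU_cont.
  - apply (continuity_pt_comp (fun t => 1 - t ^ 2) sqrt).
    + apply derivable_continuous_pt. reg.
    + apply continuity_pt_sqrt. nra.
  - apply Rgt_not_eq, sqrt_pos_t; auto.
Qed.

Lemma abs_sin_le z : 0 <= z -> Rabs (sin z) <= z.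
Proof.
  intros Hz. apply Rabs_le. destruct (Req_dec z 0) as [E|E].
  { subst. rewrite sin_0. lra. }
  pose proof (sin_lt_x z ltac:(lra)). pose proof (SIN_bound z). pose proof PI2_1.
  destruct (Rle_lt_dec 1 z). lra.
  pose proof (sin_ge_0 z ltac:(lra) ltac:(lra)). lra.
Qed.

Lemma Gs_bound n y : 0 <= y -> Rabs (Gs n y) <= 2 * INR n * y.
Proof.
  intros Hy. induction n as [|m IH].
  - simpl. rewrite Rabs_R0. lra.
  - rewrite Gs_S. eapply Rle_trans. apply Rabs_triang.
    assert (Hk : 0 < INR (S m)) by (apply lt_0_INR; lia).
    unfold Rdiv. rewrite Rabs_mult, Rabs_inv, (Rabs_right (INR (S m))) by lra.
    pose proof (abs_sin_le (2 * INR (S m) * y) ltac:(nra)).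
    assert (Rabs (sin (2 * INR (S m) * y)) * / INR (S m) <= 2 * y).
    { apply (Rmult_le_reg_r (INR (S m))); auto. rewrite Rmult_assoc, Rinv_l by lra. lra. }
    rewrite S_INR in *. lra.
Qed.

Lemma improper n x : -1 < x < 1 -> improper_int_to_1 (fun t => chebU (2 * n) t / sqrt (1 - t ^ 2)) x (acos x + Gs n (acos x)).
Proof.
  intros Hx. split.
  - intros b Hb. constructor. apply continuity_implies_RiemannInt; [lra|].
    intros; apply (fU_cont n); lra.
  - intros eps Heps.
    assert (Hn : 0 < 2 * (1 + 2 * INR n)) by (pose proof (pos_INR n); lra).
    set (d' := Rmin 1 (eps / (2 * (1 + 2 * INR n)))).
    assert (Hd1 : 0 < d') by (unfold d'; apply Rmin_glb_lt; [lra| apply Rdiv_lt_0_compat; lra]).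
    assert (Hd2 : d' <= 1) by apply Rmin_l.
    assert (Hd3 : d' <= eps / (2 * (1 + 2 * INR n))) by apply Rmin_r.
    pose proof PI2_1.
    exists (1 - cos d'). split.
    { pose proof (cos_decreasing_1 0 d' ltac:(lra) ltac:(lra) ltac:(lra) ltac:(lra) Hd1).
      rewrite cos_0 in H0. lra. }
    intros b pr Hxb Hb.
    rewrite <- (RInt_Reals _ x b pr).
    rewrite (is_RInt_unique _ x b (minus (KU n b) (KU n x))).
    2:{ apply (is_RInt_derive (KU n) (fU n)); rewrite Rmin_left, Rmax_right by lra; intros y Hy.
        - apply is_derive_Reals. apply KU_deriv. lra.
        - apply continuity_pt_filterlim. apply (fU_cont n). lra. }
    change (minus (KU n b) (KU n x)) with (KU n b - KU n x).
    unfold KU.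
    replace (- (acos b + Gs n (acos b)) - - (acos x + Gs n (acos x)) - (acos x + Gs n (acos x)))
      with (- (acos b + Gs n (acos b))) by ring.
    rewrite Rabs_Ropp.
    pose proof (acos_bound b) as Hab.
    assert (Hlt : acos b < d').
    { destruct (Rlt_le_dec (acos b) d') as [L|L]; auto. exfalso.
      destruct (Req_dec (acos b) d') as [E|E].
      - rewrite <- E in Hb. rewrite cos_acos in Hb by lra. lra.
      - pose proof (cos_decreasing_1 d' (acos b) ltac:(lra) ltac:(lra) ltac:(lra) ltac:(lra) ltac:(lra)).
        rewrite cos_acos in H0 by lra. lra. }
    eapply Rle_lt_trans. apply Rabs_triang.
    rewrite Rabs_right by lra.
    pose proof (Gs_bound n (acos b) ltac:(lra)).
    assert ((1 + 2 * INR n) * acos b < eps).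
    { apply Rle_lt_trans with ((1 + 2 * INR n) * (eps / (2 * (1 + 2 * INR n)))).
      - apply Rmult_le_compat_l; lra.
      - field_simplify; lra. }
    nra.
Qed.

Lemma Gs_refl n y : Gs n (PI - y) = - Gs n y.
Proof.
  induction n as [|m IH]; [simpl; ring|].
  rewrite !Gs_S, IH.
  replace (2 * INR (S m) * (PI - y)) with (- (2 * INR (S m) * y) + 2 * INR (S m) * PI) by ring.
  rewrite sin_period, sin_neg. field. apply not_0_INR; lia.
Qed.

Theorem theorem4p3 :
  forall (n : nat) (x : R), (1 <= n)%nat ->
    (0 < x < 1 ->
       exists I, improper_int_to_1 (fun t => chebU (2 * n) t / sqrt (1 - t ^ 2)) x I /\
                 acos x < I < PI - acos x) /\
    (-1 < x < 0 ->
       exists I, improper_int_to_1 (fun t => chebU (2 * n) t / sqrt (1 - t ^ 2)) x I /\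
                 acos x > I /\ I > PI - acos x).
Proof.
  intros n x Hn.
  assert (Hth : forall y, 0 < y < 1 -> 0 < acos y < PI/2).
  { intros y Hy. pose proof (acos_bound_lt y ltac:(lra)). split; [lra|].
    destruct (Rlt_le_dec (acos y) (PI/2)) as [L|L]; auto. exfalso.
    destruct (Req_dec (acos y) (PI/2)) as [E|E].
    - pose proof (cos_acos y ltac:(lra)). rewrite E, cos_PI2 in H0. lra.
    - pose proof (cos_lt_0 (acos y) ltac:(lra) ltac:(lra)). rewrite cos_acos in H0 by lra. lra. }
  destruct n as [|m]; [lia|].
  split.
  - intros Hx. exists (acos x + Gs (S m) (acos x)). split; [apply improper; lra|].
    specialize (Hth x Hx).
    pose proof (Gs_pos m (acos x) Hth). pose proof (Gs_upper (S m) (acos x) Hth). lra.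
  - intros Hx. exists (acos x + Gs (S m) (acos x)). split; [apply improper; lra|].
    specialize (Hth (- x) ltac:(lra)).
    assert (E : acos x = PI - acos (- x)).
    { rewrite acos_opp. ring. }
    rewrite E, Gs_refl.
    pose proof (Gs_pos m (acos (-x)) Hth). pose proof (Gs_upper (S m) (acos (-x)) Hth). lra.
Qed.
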